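(* In the contention game with $n=3$ players and $k=2$ channels under acknowledgement-based feedback, the anonymous protocol $f^2$ (in every slot, regardless of history, a pending player transmits on channel 1 with probability $1/2$ and on channel 2 with probability $1/2$, and never stays idle) is an equilibrium protocol, and the expected latency of each player under it is $8/3$.
   Context: Contention game: $n$ players, channel set $K=\{1,\dots,k\}$, discrete time slots $t=1,2,\dots$. Each player has one packet; initially all players are pending. In each slot a pending player chooses (possibly at random) an action in $A=\{0,1,\dots,k\}$, where $0$ means no transmission and $a\in K$ means transmitting on channel $a$. If exactly one player transmits on a channel in a slot, her transmission succeeds and she leaves the game; if two or more transmit on the same channel they collide, all fail and remain pending. $X_{i,t}$ is player $i$'s action at slot $t$ and $h_{i,t}=(X_{i,1},\dots,X_{i,t})$ her personal history. A protocol for player $i$ is a sequence of decision rules, the rule for slot $t$ mapping the information available to $i$ to a probability distribution on $A$. The latency $T_i$ of player $i$ is the slot in which she transmits successfully; each player wants to minimize her expected latency. Acknowledgement-based feedback: after a slot, only a player who attempted transmission learns whether she succeeded; decision rules depend only on the personal history $h_{i,t-1}$. A profile $(f_1,\dots,f_n)$ is an equilibrium if for every player $i$, every slot $t$ and every history, player $i$ cannot decrease her expected latency (conditional on that history) by unilaterally deviating to another protocol from $t$ on. An anonymous protocol is one used by all players whose decision rules do not depend on the player's identity; it is an equilibrium protocol if the profile in which all players use it is an equilibrium. *)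

(* Defs.v *)
From HB Require Import structures.
From mathcomp Require Import all_boot all_order all_algebra.
From mathcomp Require Import all_classical all_reals.
From mathcomp Require Import ereal sequences.
Set Implicit Arguments. Unset Strict Implicit. Unset Printing Implicit Defensive.
Import Order.TTheory GRing.Theory Num.Theory.
Local Open Scope ring_scope.

(* Actions A = 'I_k.+1 : 0 = no transmission, a >= 1 = transmit on channel a.
   Slots are 1,2,3,...; a finite sequence w of joint action profiles
   (w_0, w_1, ...) lists the actions in slots 1, 2, ....                *)

Section Contention.
Variables (R : realType) (n k : nat).

Definition action := 'I_k.+1.
Definition jprof := {ffun 'I_n -> action}.

(* A decision rule sequence (protocol) under acknowledgement-based feedback:
   maps the personal history h_{i,t-1} (a seq of own actions, whose length
   t-1 determines the slot t) to a probability distribution on actions. *)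
Definition behavior := seq action -> action -> R.

Definition is_protocol (b : behavior) : Prop :=
  forall hist, (forall a, 0 <= b hist a) /\ \sum_(a : action) b hist a = 1.

Definition succ (pend : 'I_n -> bool) (x : jprof) (j : 'I_n) : bool :=
  [&& pend j, x j != ord0 &
      [forall j' : 'I_n, (j' != j) ==> ~~ (pend j' && (x j' == x j))]].

Definition step (pend : 'I_n -> bool) (x : jprof) : 'I_n -> bool :=
  fun j => pend j && ~~ succ pend x j.

Definition pendAfter (w : seq jprof) : 'I_n -> bool :=
  foldl step (fun _ => true) w.

Definition phist (w : seq jprof) (j : 'I_n) : seq action := [seq (x : jprof) j | x <- w].

Definition slot_weight (F : 'I_n -> behavior) (pre : seq jprof) (x : jprof) : R :=
  \prod_(j < n) (if pendAfter pre j then F j (phist pre j) (x j)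
                 else (x j == ord0)%:R).

Definition x0 : jprof := [ffun => ord0].

Definition prob (F : 'I_n -> behavior) (w : seq jprof) : R :=
  \prod_(u < size w) slot_weight F (take u w) (nth x0 w u).

Definition probEv (F : 'I_n -> behavior) (N : nat) (E : seq jprof -> bool) : R :=
  \sum_(w : N.-tuple jprof) prob F w * (E w)%:R.

(* P(T_i > s) = P(i still pending after slots 1..s) *)
Definition tailP (F : 'I_n -> behavior) (i : 'I_n) (s : nat) : R :=
  probEv F s (fun w => pendAfter w i).

(* expected latency E[T_i] = sum_{s >= 0} P(T_i > s), in the extended reals *)
Definition expected_latency (F : 'I_n -> behavior) (i : 'I_n) : \bar R :=
  (\sum_(0 <= s <oo) (tailP F i s)%:E)%E.

(* expected latency of i conditional on the event H = "i is still pending at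
   the start of slot m+1" (m = length of i's personal history):
   E[T_i | H] = sum_{s >= 0} P(T_i > s /\ H) / P(H). *)
Definition cond_latency (F : 'I_n -> behavior) (i : 'I_n) (m : nat) : \bar R :=
  (\sum_(0 <= s <oo)
     ((probEv F (maxn s m)
         (fun w => pendAfter (take s w) i && pendAfter (take m w) i)
       / probEv F m (fun w => pendAfter w i))%:E))%E.

Definition deviate (F : 'I_n -> behavior) (i : 'I_n) (b : behavior) : 'I_n -> behavior :=
  fun j => if j == i then b else F j.

(* player i's past actions are fixed to the personal history h; from slot
   (size h).+1 on she follows the protocol g *)
Definition prefixed (h : seq action) (g : behavior) : behavior :=
  fun hist => if (size hist < size h)%N then (fun a => (a == nth ord0 h (size hist))%:R)
              else g hist.

(* equilibrium: for every player i, every slot t = (size h).+1 and every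
   personal history h, no protocol g used from t on decreases i's expected
   latency conditional on that history *)
Definition equilibrium (F : 'I_n -> behavior) : Prop :=
  forall (i : 'I_n) (h : seq action) (g : behavior), is_protocol g ->
    (cond_latency (deviate F i (prefixed h (F i))) i (size h)
     <= cond_latency (deviate F i (prefixed h g)) i (size h))%E.

Definition equilibrium_protocol (f : behavior) : Prop :=
  equilibrium (fun _ => f).

End Contention.

Definition f2 (R : realType) : behavior R 2 :=
  fun _ a => if a == ord0 then 0 else 2^-1.

(* Main.v *)
Require Import Defs.
From HB Require Import structures.
From mathcomp Require Import all_boot all_order all_algebra.
From mathcomp Require Import all_classical all_reals.
From mathcomp Require Import ereal sequences.
From mathcomp Require Import topology normedtype.
From mathcomp Require Import ring lra.
Import Order.TTheory GRing.Theory Num.Theory.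
Local Open Scope ring_scope.
Set Implicit Arguments. Unset Strict Implicit. Unset Printing Implicit Defensive.

Notation jp := (jprof 3 2).
Definition i0 : 'I_3 := ord0.
Definition i1 : 'I_3 := @Ordinal 3 1 isT.
Definition i2 : 'I_3 := @Ordinal 3 2 isT.
Definition ords3 : seq 'I_3 := [:: i0; i1; i2].
Definition mkb (b0 b1 b2 : bool) : 'I_3 -> bool := fun j => if j == i0 then b0 else if j == i1 then b1 else b2.
Definition mkf (a b c : 'I_3) : 'I_3 -> 'I_3 := fun j => if j == i0 then a else if j == i1 then b else c.

Definition succ' (pend : 'I_3 -> bool) (x : 'I_3 -> 'I_3) (j : 'I_3) : bool :=
  [&& pend j, x j != ord0 & all (fun j' => (j' != j) ==> ~~ (pend j' && (x j' == x j))) ords3].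
Definition step' (pend : 'I_3 -> bool) (x : 'I_3 -> 'I_3) : 'I_3 -> bool :=
  fun j => pend j && ~~ succ' pend x j.
Definition ocnt (i : 'I_3) (pend : 'I_3 -> bool) : nat := sumn [seq (pend j : nat) | j <- ords3 & j != i].
Definition Phin (i : 'I_3) (pend : 'I_3 -> bool) : nat :=
  if pend i then (match ocnt i pend with 0 => 6 | 1 => 12 | _ => 16 end)%N else 0%N.
Definition wn (pend : 'I_3 -> bool) (j : 'I_3) (a : 'I_3) : nat :=
  if pend j then (a != ord0 :> 'I_3) : nat else (2 * (a == ord0 :> 'I_3))%N.
Definition Mx (i : 'I_3) (pend : 'I_3 -> bool) (x : 'I_3 -> 'I_3) : nat :=
  (foldr muln 1%N [seq wn pend j (x j) | j <- ords3 & j != i] * Phin i (step' pend x))%N.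
Definition K3 (i : 'I_3) (pend : 'I_3 -> bool) (a : 'I_3) : nat :=
  sumn [seq sumn [seq sumn [seq (if mkf a0 a1 a2 i == a then Mx i pend (mkf a0 a1 a2) else 0)%N | a2 <- ords3] | a1 <- ords3] | a0 <- ords3].

Lemma table : all (fun i => all (fun b0 => all (fun b1 => all (fun b2 => all (fun a =>
  let pend := mkb b0 b1 b2 in
  pend i ==> ((4 * Phin i pend <= K3 i pend a + 24) &&
             ((a != ord0) ==> (K3 i pend a + 24 == 4 * Phin i pend)))%N) ords3) [:: true; false]) [:: true; false]) [:: true; false]) ords3.
Proof. vm_compute. reflexivity. Qed.

Lemma ordsE (j : 'I_3) : [\/ j = i0, j = i1 | j = i2].
Proof. case: j => [[|[|[|m]]] Hm]; [constructor 1|constructor 2|constructor 3|by []]; exact: val_inj. Qed.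

Lemma mem_ords3 (j : 'I_3) : j \in ords3.
Proof. by rewrite /ords3 !inE; case: (ordsE j) => ->; rewrite eqxx ?orbT. Qed.

Lemma pend_mkb (pend : 'I_3 -> bool) : pend = mkb (pend i0) (pend i1) (pend i2).
Proof. apply: funext => j; rewrite /mkb; by case: (ordsE j) => ->. Qed.

Lemma table_at (i : 'I_3) (pend : 'I_3 -> bool) (a : 'I_3) : pend i ->
  ((4 * Phin i pend <= K3 i pend a + 24) &&
             ((a != ord0) ==> (K3 i pend a + 24 == 4 * Phin i pend)))%N.
Proof.
have := table => /allP /(_ i (mem_ords3 i)) /allP /(_ (pend i0)) .
have Hb : forall b : bool, b \in [:: true; false] by case.
move=> /(_ (Hb _)) /allP /(_ (pend i1) (Hb _)) /allP /(_ (pend i2) (Hb _)) /allP /(_ a (mem_ords3 a)).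
by rewrite -pend_mkb => /implyP.
Qed.

Lemma succE (pend : 'I_3 -> bool) (x : jp) j : succ pend x j = succ' pend (fun j => x j) j.
Proof.
rewrite /succ /succ'; congr [&& _, _ & _].
apply/forallP/allP => H j' //; exact: (H j' (mem_ords3 j')).
Qed.

Lemma stepE (pend : 'I_3 -> bool) (x : jp) : step pend x = step' pend (fun j => x j).
Proof. by apply: funext => j; rewrite /step /step' succE. Qed.

Lemma big3 (T : Type) (idx : T) (op : T -> T -> T) (F : 'I_3 -> T) :
  \big[op/idx]_(j < 3) F j = op (F i0) (op (F i1) (op (F i2) idx)).
Proof.
rewrite !big_ord_recl big_ord0; congr (op _ (op _ (op _ _))); congr F; exact: val_inj.
Qed.

Lemma big3s (T : Type) (idx : T) (op : T -> T -> T) (F : 'I_3 -> T) :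
  \big[op/idx]_(j <- ords3) F j = op (F i0) (op (F i1) (op (F i2) idx)).
Proof. by rewrite !big_cons big_nil. Qed.

Lemma sum_ffun3 (V : nmodType) (H : ('I_3 -> 'I_3) -> V) :
  \sum_(x : jp) H (fun j => x j) = \sum_(a0 < 3) \sum_(a1 < 3) \sum_(a2 < 3) H (mkf a0 a1 a2).
Proof.
rewrite pair_big pair_big /=.
rewrite (reindex (fun p : ('I_3 * 'I_3) * 'I_3 => [ffun j => mkf p.1.1 p.1.2 p.2 j] : jp)); last first.
  exists (fun x : jp => ((x i0, x i1), x i2)).
    by move=> [[a b] c] _; rewrite !ffunE.
  move=> x _; apply/ffunP => j; rewrite ffunE /mkf /=.
  by case: (ordsE j) => ->.
apply: eq_bigr => -[[a b] c] _ /=; congr H; apply: funext => j; by rewrite ffunE.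
Qed.

Section Core.
Variable R : realType.

Definition f2w (a : 'I_3) : R := if a == ord0 then 0 else 2^-1.

Definition W (pend : 'I_3 -> bool) (i : 'I_3) (p : 'I_3 -> R) (x : 'I_3 -> 'I_3) : R :=
  \prod_(j < 3) (if pend j then (if j == i then p (x j) else f2w (x j)) else (x j == ord0)%:R).

Lemma W_eq (pend : 'I_3 -> bool) (i : 'I_3) (p : 'I_3 -> R) (x : 'I_3 -> 'I_3) : pend i ->
  W pend i p x * (Phin i (step' pend x))%:R / 6 = p (x i) * (Mx i pend x)%:R / 24.
Proof.
move=> Hi; rewrite /W big3 /Mx natrM.
case: (ordsE i) => Ei; subst i; rewrite Hi /= /wn /f2w.
all: move: (Phin _ _) => c.
- by move: (pend i1) (pend i2) (x i1 == ord0) (x i2 == ord0) (p (x i0)) => [] [] [] [] q; rewrite /= ?natrM; field.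
- by move: (pend i0) (pend i2) (x i0 == ord0) (x i2 == ord0) (p (x i1)) => [] [] [] [] q; rewrite /= ?natrM; field.
- by move: (pend i0) (pend i1) (x i0 == ord0) (x i1 == ord0) (p (x i2)) => [] [] [] [] q; rewrite /= ?natrM; field.
Qed.

Lemma sumn_ords3 (F : 'I_3 -> nat) : (sumn [seq F j | j <- ords3])%:R = \sum_(j < 3) (F j)%:R :> R.
Proof. by rewrite big3 /= !natrD addr0. Qed.

Lemma K3E (i : 'I_3) pend a : (K3 i pend a)%:R =
  \sum_(a0 < 3) \sum_(a1 < 3) \sum_(a2 < 3)
     ((if mkf a0 a1 a2 i == a then Mx i pend (mkf a0 a1 a2) else 0)%N)%:R :> R.
Proof.
rewrite /K3 sumn_ords3; apply: eq_bigr => a0 _; rewrite sumn_ords3.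
by apply: eq_bigr => a1 _; rewrite sumn_ords3.
Qed.

Lemma inner3 (p : 'I_3 -> R) (y : 'I_3) (m : nat) :
  \sum_(a < 3) p a * ((if y == a then m else 0)%N)%:R / 24 = p y * m%:R / 24.
Proof.
rewrite (bigD1 y) //= eqxx big1 ?addr0 // => a Ha.
by rewrite eq_sym (negbTE Ha) mulr0 mul0r.
Qed.

Lemma EK (pend : 'I_3 -> bool) (i : 'I_3) (p : 'I_3 -> R) : pend i ->
  \sum_(x : jp) W pend i p (fun j => x j) * (Phin i (step pend x))%:R / 6 =
  \sum_(a < 3) p a * (K3 i pend a)%:R / 24.
Proof.
move=> Hi.
under eq_bigr do rewrite stepE.
rewrite (sum_ffun3 (fun f => W pend i p f * (Phin i (step' pend f))%:R / 6)).
under eq_bigr do under eq_bigr do under eq_bigr do rewrite W_eq //.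
under [RHS]eq_bigr do rewrite K3E mulr_sumr mulr_suml.
rewrite [RHS]exchange_big; apply: eq_bigr => a0 _.
under [RHS]eq_bigr do rewrite mulr_sumr mulr_suml.
rewrite [RHS]exchange_big; apply: eq_bigr => a1 _.
under [RHS]eq_bigr do rewrite mulr_sumr mulr_suml.
rewrite [RHS]exchange_big; apply: eq_bigr => a2 _.
by rewrite inner3.
Qed.


Lemma core (pend : 'I_3 -> bool) (i : 'I_3) (p : 'I_3 -> R) :
  (forall a, 0 <= p a) -> \sum_(a < 3) p a = 1 ->
  (Phin i pend)%:R / 6 - (pend i)%:R <=
     \sum_(x : jp) W pend i p (fun j => x j) * (Phin i (step pend x))%:R / 6 /\
  (p ord0 = 0 -> \sum_(x : jp) W pend i p (fun j => x j) * (Phin i (step pend x))%:R / 6 =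
                 (Phin i pend)%:R / 6 - (pend i)%:R).
Proof.
move=> p0 p1.
case Hi: (pend i); last first.
  have -> : \sum_(x : jp) W pend i p (fun j => x j) * (Phin i (step pend x))%:R / 6 = 0.
    by rewrite big1 // => x _; rewrite /Phin /step Hi /= mulr0 mul0r.
  by rewrite /Phin Hi /= mul0r subr0.
rewrite EK //.
set c' : R := (4 * (Phin i pend)%:R - 24) / 24.
have Hc : (Phin i pend)%:R / 6 - (true : nat)%:R = c' by rewrite /c' /=; field.
have Hs : \sum_(a < 3) p a * c' = c' by rewrite -mulr_suml p1 mul1r.
rewrite Hc -Hs; split.
  rewrite -subr_ge0 -sumrB sumr_ge0 // => a _.
  have := table_at a Hi => /andP [H1 _].
  rewrite -mulrA -mulrBr mulr_ge0 // subr_ge0 /c' ler_pM2r // lerBlDr.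
  by rewrite -natrM -(natrD _ _ 24) ler_nat.
move=> P0; apply/eqP; rewrite -subr_eq0 -sumrB; apply/eqP; apply: big1 => a _.
case: (eqVneq a ord0) => [->|Ha]; first by rewrite P0 !mul0r subrr.
have := table_at a Hi => /andP [_ /implyP /(_ Ha) /eqP H2].
have H2' := congr1 (fun n : nat => n%:R : R) H2; rewrite /= natrD natrM in H2'.
rewrite /c'; move: H2'; set K := (K3 i pend a)%:R; set Q := (Phin i pend)%:R => H2'.
have -> : K = 4 * Q - 24 by rewrite -H2' addrK.
by rewrite mulrA subrr.
Qed.

End Core.

Section Traj.
Variable R : realType.
Notation beh := (behavior R 2).
Lemma take_rcons' (T : Type) (w : seq T) x u : (u <= size w)%N -> take u (rcons w x) = take u w.
Proof. by move=> H; rewrite -cats1 takel_cat. Qed.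

Lemma prob_rcons (F : 'I_3 -> beh) w x :
  prob F (rcons w x) = prob F w * slot_weight F w x.
Proof.
rewrite /prob size_rcons big_ord_recr /=.
rewrite take_rcons' // take_size nth_rcons ltnn eqxx.
have E : forall u : 'I_(size w), slot_weight F (take u (rcons w x)) (nth (x0 3 2) (rcons w x) u)
   = slot_weight F (take u w) (nth (x0 3 2) w u).
  move=> u; rewrite take_rcons'; last exact: ltnW.
  by rewrite nth_rcons ltn_ord.
rewrite (eq_bigr _ (fun u _ => E u)); reflexivity.
Qed.

Lemma tower (F : 'I_3 -> beh) N (phi : seq jp -> R) :
  \sum_(t : N.+1.-tuple jp) prob F t * phi t =
  \sum_(t : N.-tuple jp) \sum_(x : jp) prob F (rcons t x) * phi (rcons t x).
Proof.
rewrite pair_big.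
rewrite (reindex (fun p : N.-tuple jp * jp => [tuple of rcons p.1 p.2])); last first.
  exists (fun t : N.+1.-tuple jp => ([tuple of belast (thead t) (behead_tuple t)], last (thead t) (behead t))).
    move=> [t x] _.
    have e1 : [tuple of belast (thead [tuple of rcons t x]) (behead_tuple [tuple of rcons t x])] = t.
      apply: val_inj => /=; case: t => [[|y s] Hs] //=; by rewrite belast_rcons.
    have e2 : last (thead [tuple of rcons t x]) (behead [tuple of rcons t x]) = x.
      case: t {e1} => [[|y s] Hs] //=; by rewrite last_rcons.
    by rewrite /= e1 e2.
  move=> t _; apply: val_inj => /=.
  by rewrite -lastI (tuple_eta t).
by apply: eq_bigr => -[t x] _.
Qed.

Lemma slot_ge0 (F : 'I_3 -> beh) pre x : (forall j h a, 0 <= F j h a) -> 0 <= slot_weight F pre x.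
Proof. by move=> H; apply: prodr_ge0 => j _; case: ifP. Qed.

Lemma prob_ge0 (F : 'I_3 -> beh) w : (forall j h a, 0 <= F j h a) -> 0 <= prob F w.
Proof. by move=> H; apply: prodr_ge0 => u _; exact: slot_ge0. Qed.

Lemma slot_sum1 (F : 'I_3 -> beh) pre : (forall j, is_protocol (F j)) ->
  \sum_(x : jp) slot_weight F pre x = 1.
Proof.
move=> H; rewrite /slot_weight -(bigA_distr_bigA (fun j (a : 'I_3) =>
  if pendAfter pre j then F j (phist pre j) a else (a == ord0)%:R)) /=.
apply: big1 => j _; case: (pendAfter pre j); first by case: (H j (phist pre j)).
by rewrite (bigD1 ord0) //= ?eqxx big1 ?addr0 // => a /negbTE ->.
Qed.

Lemma pendAfter_rcons (w : seq jp) (x : jp) : pendAfter (rcons w x) = step (pendAfter w) x.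
Proof. by rewrite /pendAfter foldl_rcons. Qed.

Lemma foldl_step_le (p : 'I_3 -> bool) (ws : seq jp) j : foldl (@step 3 2) p ws j -> p j.
Proof.
elim: ws p => [|x ws IH] p //= /IH; by rewrite /step => /andP [].
Qed.

Lemma pend_take (w : seq jp) s j : pendAfter w j -> pendAfter (take s w) j.
Proof.
by rewrite -{1}(cat_take_drop s w) /pendAfter foldl_cat => /foldl_step_le.
Qed.

Lemma f2_protocol : is_protocol (f2 R).
Proof.
move=> h; split; first by move=> a; rewrite /f2; case: ifP => // _; rewrite invr_ge0 ler0n.
rewrite big3 /f2 /=; lra.
Qed.

Lemma prefixed_protocol h (g : beh) : is_protocol g -> is_protocol (prefixed h g).
Proof.
move=> Hg hist; rewrite /prefixed; case: ifP => _; last exact: Hg.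
split=> [a|]; first by rewrite ler0n.
by rewrite (bigD1 (nth ord0 h (size hist))) //= ?eqxx big1 ?addr0 // => a /negbTE ->.
Qed.
End Traj.

Section Ana.
Variable R : realType.

Lemma ser_le (a : nat -> R) X : (forall s, 0 <= a s) ->
  (forall N, \sum_(0 <= s < N) a s <= X) ->
  (\sum_(0 <= s <oo) (a s)%:E <= X%:E)%E.
Proof.
move=> a0 H; apply: lime_le.
  by apply: is_cvg_nneseries => n _ _; rewrite lee_fin.
by apply: nearW => N; rewrite sumEFin lee_fin.
Qed.

Lemma ser_ge (a : nat -> R) X c m0 : (forall s, 0 <= a s) ->
  (forall s, a s.+1 <= a s) -> 0 < c ->
  (forall N, (m0 <= N)%N -> X - c * a N <= \sum_(0 <= s < N) a s) ->
  (X%:E <= \sum_(0 <= s <oo) (a s)%:E)%E.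
Proof.
move=> a0 amono c0 H.
have mono : forall s t, (s <= t)%N -> a t <= a s.
  move=> s t /subnK <-; elim: (t - s)%N => //= d IH.
  by rewrite addSn; exact: le_trans (amono _) IH.
apply/lee_addgt0Pr => e e0.
have [N HX] : exists N, X - e <= \sum_(0 <= s < N) a s.
  pose Y := Num.max X 0.
  pose N := (m0 + (Num.truncn (Y * c / e)).+1)%N.
  exists N.
  have HN := H N (leq_addr _ _).
  case: (lerP (c * a N) e) => Hce; first lra.
  have h0 : \sum_(0 <= s < N) a N <= \sum_(0 <= s < N) a s.
    rewrite big_nat_cond [X in _ <= X]big_nat_cond; apply: ler_sum => s /andP [/andP [_ Hs] _].
    exact: mono (ltnW Hs).
  rewrite sumr_const_nat subn0 -mulr_natr in h0.
  have h1 : Y * c / e < N%:R.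
    apply: lt_le_trans (truncnS_gt _) _; rewrite ler_nat; exact: leq_addl.
  have hY : X <= Y by rewrite /Y le_max lexx.
  have hY0 : 0 <= Y by rewrite /Y le_max lexx orbT.
  have h2 : Y * c / e * a N <= N%:R * a N by rewrite ler_wpM2r // ltW.
  have h3 : Y <= Y * c / e * a N.
    have q : 1 <= c * a N / e by rewrite ler_pdivlMr // mul1r ltW.
    have -> : Y * c / e * a N = Y * (c * a N / e) by ring.
    by rewrite ler_peMr.
  lra.
apply: le_trans (_ : (\sum_(0 <= s < N) a s + e)%:E <= _)%E; first by rewrite lee_fin; lra.
rewrite EFinD leeD2r // -sumEFin.
by apply: nneseries_lim_ge => n _ _; rewrite lee_fin.
Qed.
End Ana.

Section Dev.
Variable R : realType.
Variable i : 'I_3.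
Notation beh := (behavior R 2).

Definition F0 : 'I_3 -> beh := fun _ => f2 R.
Definition G (b : beh) := deviate F0 i b.
Definition Phi (w : seq jp) : R := (Phin i (pendAfter w))%:R / 6.
Definition S (b : beh) N := \sum_(t : N.-tuple jp) prob (G b) t * Phi t.
Definition P (b : beh) N := tailP (G b) i N.

Lemma G_protocol b : is_protocol b -> forall j, is_protocol (G b j).
Proof. by move=> Hb j; rewrite /G /deviate; case: (j == i) => //; exact: f2_protocol. Qed.

Lemma G_ge0 b : is_protocol b -> forall j h a, 0 <= G b j h a.
Proof. by move=> Hb j h a; case: (G_protocol Hb j h). Qed.

Lemma slotW b (pre : seq jp) x :
  slot_weight (G b) pre x = W (pendAfter pre) i (b (phist pre i)) (fun j => x j).
Proof.
rewrite /slot_weight /W; apply: eq_bigr => j _; rewrite /G /deviate.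
case: (pendAfter pre j) => //; case: (eqVneq j i) => [->|] //.
Qed.

Lemma Phi_bound (w : seq jp) : 0 <= Phi w <= 8 / 3 * (pendAfter w i)%:R.
Proof.
rewrite /Phi /Phin; case: (pendAfter w i) => /=; last by rewrite !mul0r mulr0 lexx.
by case: (ocnt _ _) => [|[|n]] /=; apply/andP; split; lra.
Qed.

Lemma S_step b N : is_protocol b ->
  S b N - P b N <= S b N.+1 /\
  ((forall h, size h = N -> b h ord0 = 0) -> S b N.+1 = S b N - P b N).
Proof.
move=> Hb.
have E : forall t : N.-tuple jp, \sum_(x : jp) prob (G b) (rcons t x) * Phi (rcons t x) =
   prob (G b) t * \sum_(x : jp) W (pendAfter t) i (b (phist t i)) (fun j => x j) *
        (Phin i (step (pendAfter t) x))%:R / 6.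
  move=> t; rewrite mulr_sumr; apply: eq_bigr => x _.
  by rewrite prob_rcons slotW /Phi pendAfter_rcons !mulrA.
have D : S b N - P b N = \sum_(t : N.-tuple jp) prob (G b) t * (Phi t - (pendAfter t i)%:R).
  by rewrite /S /P /tailP /probEv -sumrB; apply: eq_bigr => t _; rewrite mulrBr.
rewrite /S tower D; split.
  apply: ler_sum => t _; rewrite E; apply: ler_wpM2l; first by apply: prob_ge0; exact: G_ge0.
  have [p0 p1] := Hb (phist t i).
  exact: (core (pendAfter t) i p0 p1).1.
move=> H0; apply: eq_bigr => t _; rewrite E; congr (_ * _).
have [p0 p1] := Hb (phist t i).
apply: (core (pendAfter t) i p0 p1).2; apply: H0.
by rewrite /phist size_map size_tuple.
Qed.

Lemma P_step b N : is_protocol b -> P b N.+1 <= P b N.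
Proof.
move=> Hb; rewrite /P /tailP /probEv (tower _ _ (fun t => (pendAfter t i)%:R)); apply: ler_sum => t _.
apply: le_trans (_ : _ <= \sum_(x : jp) prob (G b) t * (pendAfter t i)%:R * slot_weight (G b) t x) _; last first.
  by rewrite -mulr_sumr (slot_sum1 t (G_protocol Hb)) mulr1.
apply: ler_sum => x _; rewrite prob_rcons pendAfter_rcons.
rewrite [X in _ <= X]mulrAC; apply: ler_wpM2l.
  by apply: mulr_ge0; [apply: prob_ge0|apply: slot_ge0]; exact: G_ge0.
by rewrite ler_nat /step /=; case: (pendAfter t i); rewrite /= ?leq_b1.
Qed.

Lemma P_ge0 b N : is_protocol b -> 0 <= P b N.
Proof.
move=> Hb; apply: sumr_ge0 => t _; apply: mulr_ge0; last exact: ler0n.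
by apply: prob_ge0; exact: G_ge0.
Qed.

Lemma P_mono b s t : is_protocol b -> (s <= t)%N -> P b t <= P b s.
Proof.
move=> Hb /subnK <-; elim: (t - s)%N => //= d IH.
by rewrite addSn; apply: le_trans _ IH; exact: P_step.
Qed.

Lemma S_bound b N : is_protocol b -> 0 <= S b N <= 8 / 3 * P b N.
Proof.
move=> Hb; apply/andP; split.
  apply: sumr_ge0 => t _; apply: mulr_ge0; first by apply: prob_ge0; exact: G_ge0.
  by case/andP: (Phi_bound t).
rewrite /P /tailP /probEv mulr_sumr; apply: ler_sum => t _.
rewrite [X in _ <= X]mulrCA; apply: ler_wpM2l; first by apply: prob_ge0; exact: G_ge0.
by case/andP: (Phi_bound t).
Qed.

Lemma telescope b m N : is_protocol b -> (m <= N)%N ->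
  S b m - S b N <= \sum_(m <= s < N) P b s /\
  ((forall h, (m <= size h)%N -> b h ord0 = 0) -> S b m - S b N = \sum_(m <= s < N) P b s).
Proof.
move=> Hb; elim: N => [|N IH].
  by rewrite leqn0 => /eqP ->; rewrite big_geq // subrr; split.
rewrite leq_eqVlt => /orP [/eqP <-|]; first by rewrite big_geq // subrr; split.
rewrite ltnS => HmN; have [I1 I2] := IH HmN; have [J1 J2] := S_step N Hb.
rewrite big_nat_recr //=; split; first lra.
move=> H0; rewrite -(I2 H0) (J2 _); first lra.
by move=> h Hh; apply: H0; rewrite Hh.
Qed.

Lemma prob_prefix h (g1 g2 : beh) (t : seq jp) : (size t <= size h)%N ->
  prob (G (prefixed h g1)) t = prob (G (prefixed h g2)) t.
Proof.
move=> Ht; rewrite /prob; apply: eq_bigr => u _; rewrite /slot_weight; apply: eq_bigr => j _.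
rewrite /G /deviate; case: (j == i) => //.
have Hu : (size (phist (take u t) j) < size h)%N.
  rewrite /phist size_map size_take ltn_ord; exact: leq_trans (ltn_ord u) Ht.
by rewrite /prefixed Hu.
Qed.

Lemma S_prefix h (g1 g2 : beh) : S (prefixed h g1) (size h) = S (prefixed h g2) (size h).
Proof. by apply: eq_bigr => t _; rewrite (prob_prefix g1 g2) // size_tuple. Qed.

Lemma P_prefix h (g1 g2 : beh) : P (prefixed h g1) (size h) = P (prefixed h g2) (size h).
Proof. by apply: eq_bigr => t _; rewrite (prob_prefix g1 g2) // size_tuple. Qed.

Lemma condE (b : beh) m : cond_latency (G b) i m =
  (\sum_(0 <= s <oo) ((P b (maxn s m) / P b m)%:E))%E.
Proof.
rewrite /cond_latency; apply: eq_eseriesr => s _; congr ((_ / _)%:E).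
rewrite /P /tailP /probEv; apply: eq_bigr => t _; congr (_ * (nat_of_bool _)%:R).
case: (boolP (s <= m)%N) => H; last rewrite -ltnNge in H.
  have Ht : size (tval t) = m by rewrite size_tuple (maxn_idPr H).
  rewrite [take m t]take_oversize ?Ht //.
  by case E: (pendAfter t i); rewrite ?andbF ?andbT // pend_take.
have Ht : size (tval t) = s by rewrite size_tuple (maxn_idPl (ltnW H)).
rewrite [take s t]take_oversize ?Ht //.
by case E: (pendAfter t i) => //=; rewrite pend_take.
Qed.

Lemma partialE (b : beh) m N D : (m <= N)%N ->
  \sum_(0 <= s < N) (P b (maxn s m) / D) = m%:R * (P b m / D) + (\sum_(m <= s < N) P b s) / D.
Proof.
move=> HmN; rewrite (big_cat_nat (leq0n m) HmN) /=; congr (_ + _).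
  rewrite big_nat_cond (eq_bigr (fun _ => P b m / D)); last first.
    by move=> s /andP [/andP [_ Hs] _]; rewrite (maxn_idPr (ltnW Hs)).
  by rewrite -big_nat_cond sumr_const_nat subn0 mulr_natl.
rewrite mulr_suml big_nat_cond [in RHS]big_nat_cond; apply: eq_bigr => s /andP [/andP [Hs _] _].
by rewrite (maxn_idPl Hs).
Qed.

End Dev.

Section Main.
Variable R : realType.
Notation beh := (behavior R 2).

Lemma f2_0 h : f2 R h ord0 = 0.
Proof. by rewrite /f2 eqxx. Qed.

Lemma equil : @equilibrium_protocol R 3 2 (f2 R).
Proof.
move=> i h g Hg.
have Ef : deviate (fun _ : 'I_3 => f2 R) i (prefixed h ((fun _ => f2 R) i)) = G i (prefixed h (f2 R)) by [].
have Eg : deviate (fun _ : 'I_3 => f2 R) i (prefixed h g) = G i (prefixed h g) by [].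
rewrite Ef Eg !condE.
set m := size h.
set bf := prefixed h (f2 R); set bg := prefixed h g.
have Hf : is_protocol bf by apply: prefixed_protocol; exact: f2_protocol.
have Hg' : is_protocol bg by apply: prefixed_protocol.
have ED : P i bg m = P i bf m by rewrite /m (P_prefix i h g (f2 R)).
have ES : S i bg m = S i bf m by rewrite /m (S_prefix i h g (f2 R)).
rewrite ED; set D := P i bf m.
have D0 : 0 <= D by exact: P_ge0.
have tf : forall h', (m <= size h')%N -> bf h' ord0 = 0.
  by move=> h' Hh; rewrite /bf /prefixed ltnNge Hh /= f2_0.
case: (eqVneq D 0) => [D00|Dn0].
  apply: (@le_trans _ _ (0%:E)).
    apply: ser_le => [s|N]; first by rewrite D00 invr0 mulr0.
    by rewrite big1 // => s _; rewrite D00 invr0 mulr0.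
  apply: nneseries_ge0 => s _ _; rewrite lee_fin divr_ge0 //; exact: P_ge0.
have Dp : 0 < D by rewrite lt_def Dn0 D0.
have HSf := S_bound i m Hf.
apply: (@le_trans _ _ ((m%:R + S i bf m / D)%:E)).
  apply: ser_le => [s|N]; first by rewrite divr_ge0 //; exact: P_ge0.
  pose N' := maxn N m.
  apply: (@le_trans _ _ (\sum_(0 <= s < N') (P i bf (maxn s m) / D))).
    rewrite (big_cat_nat (leq0n N) (leq_maxl N m)) /= lerDl.
    by apply: sumr_ge0 => s _; rewrite divr_ge0 //; exact: P_ge0.
  rewrite partialE ?leq_maxr // divff // mulr1 lerD2l.
  have [_ T2] := telescope i Hf (leq_maxr N m).
  rewrite -(T2 tf) ler_pM2r ?invr_gt0 // gerBl.
  by case/andP: (S_bound i N' Hf).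
apply: (@ser_ge _ _ _ (8 / 3) m).
- by move=> s; rewrite divr_ge0 //; exact: P_ge0.
- move=> s; rewrite ler_wpM2r ?invr_ge0 //; apply: P_mono => //.
  by rewrite geq_max !leq_max leqnSn leqnn orbT.
- lra.
move=> N HmN.
rewrite partialE // ED -/D divff // mulr1 (maxn_idPl HmN).
have [T1 _] := telescope i Hg' HmN.
have HSg := S_bound i N Hg'.
rewrite -ES.
set SN := S i bg N in T1 HSg *; set Sm := S i bg m in T1 *.
set PN := P i bg N in HSg *; set Q := \sum_(m <= s < N) P i bg s in T1 *.
have : Sm / D - 8 / 3 * (PN / D) <= Q / D.
  rewrite mulrA -mulrBl ler_pM2r ?invr_gt0 //.
  case/andP: HSg => _ HSg; lra.
lra.
Qed.

Lemma latency (i : 'I_3) : expected_latency (fun _ => f2 R) i = ((8 / 3 : R)%:E)%E.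
Proof.
have EF : (fun _ : 'I_3 => f2 R) = G i (f2 R).
  by apply: funext => j; rewrite /G /deviate; case: (j == i).
have Hf := f2_protocol R.
have S0 : S i (f2 R) 0 = 8 / 3.
  rewrite /S (big_pred1 [tuple]); last by move=> t; rewrite /= [t]tuple0; apply/esym/eqP.
  rewrite /prob /= big_ord0 mul1r /Phi /pendAfter /=.
  have -> : Phin i (fun _ : 'I_3 => true) = 16%N by case: (ordsE i) => ->.
  lra.
rewrite /expected_latency EF.
have tf : forall h', (0 <= size h')%N -> f2 R h' ord0 = 0 by move=> h' _; exact: f2_0.
apply/eqP; rewrite eq_le; apply/andP; split.
  apply: ser_le => [s|N]; first exact: P_ge0.
  have [_ T2] := telescope i Hf (leq0n N).
  rewrite -(T2 tf) S0 gerBl.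
  by case/andP: (S_bound i N Hf).
apply: (@ser_ge _ _ _ (8 / 3) 0).
- by move=> s; exact: P_ge0.
- by move=> s; apply: P_step.
- lra.
move=> N _.
have [_ T2] := telescope i Hf (leq0n N).
rewrite -(T2 tf) S0.
case/andP: (S_bound i N Hf) => _; rewrite /P; lra.
Qed.

End Main.

Theorem theorem1 (R : realType) :
  is_protocol (f2 R) /\
  @equilibrium_protocol R 3 2 (f2 R) /\
  (forall i : 'I_3, expected_latency (fun _ => f2 R) i = ((8 / 3 : R)%:E)%E).
Proof.
split; first exact: f2_protocol.
split; first exact: equil.
exact: latency.
Qed.
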